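(* Let $D=d$ and let ${\bf v}=\{v_1,\dots,v_d\}$ be linearly independent unit vectors in $\mathbb{R}^d$ such that for every $i\in\{1,\dots,d\}$ the tuple ${\bf v}\setminus i$ is completely irrational, i.e. $\overline{A_{{\bf v}\setminus i}(\mathcal{L}_{{\bf v}\setminus i})}=[0,\infty)^{d-1}$. Then for every $i\in\{1,\dots,d\}$ and all $M,\epsilon>0$ the set $$\Lambda_{M,\epsilon,i}:=\{n\in\mathbb{Z}^D:\ 0<v_k\cdot n<\epsilon\ \forall k\neq i,\ \ v_i\cdot n>M\}$$ is non-empty.
   Context: ${\bf v}\setminus i:=\{v_k\}_{k\ne i}$, $\mathcal{L}_{{\bf v}\setminus i}:=\{n\in\mathbb{Z}^D: v_k\cdot n\ge0\ \forall k\ne i\}$, and $A_{{\bf v}\setminus i}:\mathbb{R}^D\to\mathbb{R}^{d-1}$, $z\mapsto(v_k\cdot z)_{k\ne i}$. *)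

(* Defs.v *)
From HB Require Import structures.
From mathcomp Require Import all_boot all_order all_algebra.
From mathcomp Require Import all_classical all_reals all_analysis.
Set Implicit Arguments. Unset Strict Implicit. Unset Printing Implicit Defensive.
Import Order.TTheory GRing.Theory Num.Theory.
Import numFieldNormedType.Exports.
Local Open Scope classical_set_scope.
Local Open Scope ring_scope.

Section Defs.
Variable R : realType.

Definition dotR (d : nat) (u w : 'rV[R]_d) : R := \sum_(j < d) u 0 j * w 0 j.

Definition intv (d : nat) (m : 'rV[int]_d) : 'rV[R]_d :=
  map_mx (fun z : int => z%:~R) m.

Definition Lv (n : nat) (v : 'I_n.+1 -> 'rV[R]_n.+1) (i : 'I_n.+1)
  : set 'rV[int]_n.+1 :=
  [set m | forall k, k != i -> 0 <= dotR (v k) (intv m)].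

(* A_{v \ i} : R^d -> R^(d-1), z |-> (v_k . z)_{k <> i}, the coordinates
   k <> i being enumerated increasingly via lift i *)
Definition Av (n : nat) (v : 'I_n.+1 -> 'rV[R]_n.+1) (i : 'I_n.+1)
  (z : 'rV[R]_n.+1) : 'rV[R]_n :=
  \row_(k < n) dotR (v (lift i k)) z.

Definition completely_irrational (n : nat) (v : 'I_n.+1 -> 'rV[R]_n.+1)
  (i : 'I_n.+1) : Prop :=
  closure [set Av v i (intv m) | m in Lv v i] = [set x : 'rV[R]_n | forall k, 0 <= x 0 k].

Definition Lambda (n : nat) (v : 'I_n.+1 -> 'rV[R]_n.+1) (M eps : R)
  (i : 'I_n.+1) : set 'rV[int]_n.+1 :=
  [set m | (forall k, k != i -> 0 < dotR (v k) (intv m) < eps)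
           /\ M < dotR (v i) (intv m)].

End Defs.

(* Main.v *)
Require Import Defs.
From HB Require Import structures.
From mathcomp Require Import all_boot all_order all_algebra.
From mathcomp Require Import all_classical all_reals all_analysis.
From mathcomp Require Import ring lra zify.
Import Order.TTheory GRing.Theory Num.Theory.
Import numFieldNormedType.Exports.
Local Open Scope classical_set_scope.
Local Open Scope ring_scope.

Lemma dot_lin (R : realType) d (w : 'rV[R]_d) (u m : 'rV[int]_d) (z : int) :
  dotR w (intv R (u + z *: m)) = dotR w (intv R u) + z%:~R * dotR w (intv R m).
Proof.
rewrite /dotR mulr_sumr -big_split; apply: eq_bigr => j _.
by rewrite !mxE intrD intrM mulrDr mulrCA.
Qed.

Lemma int_small (z : int) (R : realType) : `|(z%:~R : R)| < 1 -> z = 0.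
Proof.
rewrite -intr_norm (_ : (1:R) = 1%:~R) // ltr_int => h; lia.
Qed.

Lemma key (R : realType) n (v : 'I_n.+1 -> 'rV[R]_n.+1) :
  row_free (\matrix_(k < n.+1, j < n.+1) v k 0 j) ->
  exists2 c : R, 0 < c & forall m : 'rV[int]_n.+1,
    (forall k, `|dotR (v k) (intv R m)| < c) -> m = 0.
Proof.
set V := \matrix_(k < n.+1, j < n.+1) v k 0 j.
rewrite row_free_unit => Vu.
set W := invmx V.
set S := \sum_(j < n.+1) \sum_(k < n.+1) `|W j k|.
have S0 : 0 <= S by apply: sumr_ge0 => j _; apply: sumr_ge0 => k _.
exists (1 / (S + 1)); first by apply: divr_gt0 => //; lra.
move=> m Hm; apply/matrixP => z j; rewrite mxE.
apply: (@int_small _ R).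
set y := V *m (intv R m)^T.
have ye : forall k, y k 0 = dotR (v k) (intv R m).
  by move=> k; rewrite /y /dotR mxE; apply: eq_bigr => l _; rewrite !mxE.
have : (intv R m)^T = W *m y by rewrite /y /W mulKmx.
have z0 : z = 0 by apply: ord1.
move/matrixP => /(_ j 0); rewrite !mxE z0 => ->.
apply: (le_lt_trans (ler_norm_sum _ _ _)).
apply: (@le_lt_trans _ _ (\sum_k `|W j k| * (1 / (S + 1)))).
  apply: ler_sum => k _; rewrite normrM ye; apply: ler_wpM2l => //.
  exact/ltW/Hm.
rewrite -mulr_suml.
have Sj : \sum_k `|W j k| <= S.
  rewrite /S [X in _ <= X](bigD1 j) //= lerDl; apply: sumr_ge0 => l _; apply: sumr_ge0 => k _; exact: normr_ge0.
have Sj0 : 0 <= \sum_k `|W j k| by apply: sumr_ge0.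
rewrite div1r mulrC ltr_pdivrMl; last lra.
rewrite mulr1; lra.
Qed.

Lemma exists_small (R : realType) n (v : 'I_n.+1 -> 'rV[R]_n.+1) i
  (ci : completely_irrational v i) (x : 'rV[R]_n) (hx : forall k, 0 <= x 0 k)
  (r : R) (hr : 0 < r) :
  exists m, Lv v i m /\ forall k, `|dotR (v (lift i k)) (intv R m) - x 0 k| < r.
Proof.
have : x \in closure [set Av v i (intv R m) | m in Lv v i].
  by rewrite ci inE.
rewrite inE => /(_ (ball x r)).
case; first exact: nbhsx_ballx.
move=> y [[m Lm <-]] Hb.
exists m; split => // k.
move: Hb; rewrite /ball /=.
by case => _ /(_ 0 k); rewrite /ball /= mxE distrC.
Qed.

Lemma exists_nz (R : realType) n (v : 'I_n.+1 -> 'rV[R]_n.+1) i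
  (ci : completely_irrational v i) (eta : R) (he : 0 < eta) :
  exists m : 'rV[int]_n.+1, m != 0 /\
    forall k, 0 < dotR (v (lift i k)) (intv R m) < eta.
Proof.
move: v i ci; case: n => [|n] v i ci.
  exists (const_mx 1); split; last by case.
  by apply/eqP => /matrixP/(_ 0 0); rewrite !mxE.
have [||m [_ Hm]] := @exists_small R n.+1 v i ci (const_mx (eta/2)) _ (eta/2).
- by move=> k; rewrite mxE; lra.
- lra.
exists m; split.
  apply/eqP => m0; move: (Hm ord0); rewrite m0 mxE.
  have -> : dotR (v (lift i ord0)) (intv R 0) = 0.
    by rewrite /dotR big1 // => j _; rewrite !mxE mulr0.
  rewrite sub0r normrN gtr0_norm; lra.
move=> k; move: (Hm k); rewrite mxE => h.
have := ltr_distlCBl h; have := ltr_distlDr h => h1 h2.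
apply/andP; split; lra.
Qed.

Theorem mainTheorem17 (R : realType) (n : nat) (v : 'I_n.+1 -> 'rV[R]_n.+1) :
  row_free (\matrix_(k < n.+1, j < n.+1) v k 0 j) ->
  (forall k, dotR (v k) (v k) = 1) ->
  (forall i, completely_irrational v i) ->
  forall (i : 'I_n.+1) (M eps : R), 0 < M -> 0 < eps ->
    Lambda v M eps i !=set0.
Proof.
move=> Hfree _ Hci i M eps M0 e0.
have [c c0 Hc] := @key R n v Hfree.
have [||u [_ Hu]] := @exists_small R n v i (Hci i) (const_mx (eps/2)) _ (eps/6).
- by move=> k; rewrite mxE; lra.
- lra.
set a := dotR (v i) (intv R u).
pose K := (Num.truncn ((`|M| + `|a|) / c)).+1.
have K0 : (0 : R) < K%:R by rewrite ltr0n.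
have HK : `|M| + `|a| < K%:R * c.
  by rewrite -ltr_pdivrMr // truncnS_gt.
pose eta := Num.min c (eps / (3 * K%:R)).
have eta0 : 0 < eta by rewrite lt_min c0 /=; apply: divr_gt0 => //; lra.
have etac : eta <= c by rewrite ge_min lexx.
have etaK : K%:R * eta <= eps / 3.
  rewrite mulrC -ler_pdivlMr // (@le_trans _ _ (eps / (3 * K%:R))) //.
    by rewrite ge_min lexx orbT.
  by rewrite invfM mulrA.
have [m [mnz Hm]] := @exists_nz R n v i (Hci i) eta eta0.
set t := dotR (v i) (intv R m).
have tc : c <= `|t|.
  rewrite leNgt; apply/negP => tc; move/eqP: mnz; apply; apply: Hc => k.
  case: (unliftP i k) => [k'|] ->; last by [].
  have := Hm k'; case/andP => h1 h2; rewrite gtr0_norm //; lra.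
pose s : int := if 0 <= t then 1 else -1.
have hs : ((s%:~R : R) = 1 /\ 0 <= t) \/ ((s%:~R : R) = -1 /\ t < 0).
  by rewrite /s; case: lerP => ht; [left|right].
have eK : ((K%:Z)%:~R : R) = K%:R by [].
exists (u + (s * K%:Z) *: m); split.
  move=> k kn; case: (unliftP i k) => [k'|] ke; last by rewrite ke eqxx in kn.
  rewrite ke dot_lin intrM eK.
  have := Hu k'; rewrite mxE => hu.
  have := ltr_distlCBl hu; have := ltr_distlDr hu => h1 h2.
  have := Hm k'; case/andP => h3 h4.
  have h5 : K%:R * dotR (v (lift i k')) (intv R m) < eps / 3.
    by apply: (lt_le_trans _ etaK); rewrite ltr_pM2l.
  have h6 : 0 < K%:R * dotR (v (lift i k')) (intv R m) by apply: mulr_gt0.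
  move: h5 h6 h1 h2.
  set d := dotR (v (lift i k')) (intv R m).
  set e := dotR (v (lift i k')) (intv R u).
  move=> h5 h6 h1 h2.
  case: hs => [[-> _]|[-> _]]; rewrite ?mul1r ?mulN1r -?mulrA ?mulNr; apply/andP; split; lra.
rewrite dot_lin intrM eK -/t -/a.
have hKt : K%:R * c <= K%:R * `|t| by rewrite ler_pM2l.
have hM : M <= `|M| := ler_norm M.
have ha : - `|a| <= a by rewrite lerNl -normrN; exact: ler_norm.
case: hs => [[-> ht]|[-> ht]]; rewrite ?mul1r ?mulN1r -?mulrA ?mulNr.
  by move: hKt; rewrite ger0_norm // => hKt; lra.
by move: hKt; rewrite ltr0_norm // mulrN => hKt; lra.
Qed.
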